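(* Let $\mathcal{LS}_{\mathfrak{A}_1}\langle X\rangle$ be the free algebra over a field of characteristic $0$ in the variety of left-symmetric algebras satisfying $(ab)c+(ba)c+(ac)b+(ca)b+(bc)a+(cb)a=0$, and equip it with the commutator $[a,b]=ab-ba$. Then every polynomial identity of degree at most $4$ satisfied by $(\mathcal{LS}_{\mathfrak{A}_1}\langle X\rangle,[\cdot,\cdot])$ is a consequence of anticommutativity and the Jacobi identity.
   Context: A left-symmetric algebra is an algebra with $(a,b,c)=(b,a,c)$, where $(a,b,c)=(ab)c-a(bc)$. *)

(* Defs.v *)
From HB Require Import structures.
From mathcomp Require Import all_boot all_order all_algebra.
Set Implicit Arguments. Unset Strict Implicit. Unset Printing Implicit Defensive.
Import GRing.Theory.
Local Open Scope ring_scope.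

(* Nonassociative polynomials in the countably many variables x_0, x_1, ...
   over a coefficient type K, written as formal expressions.  Elements of the
   free (nonassociative) algebra, and of free algebras of varieties, are
   these expressions taken modulo the congruences [tcong] below. *)
Inductive term (K : Type) : Type :=
| Var of nat
| Zero
| Add of term K & term K
| Scal of K & term K
| Mul of term K & term K.
Arguments Var {K}. Arguments Zero {K}.

Fixpoint subst (K : Type) (s : nat -> term K) (t : term K) : term K :=
  match t with
  | Var n => s n
  | Zero => Zero
  | Add a b => Add (subst s a) (subst s b)
  | Scal c a => Scal c (subst s a)
  | Mul a b => Mul (subst s a) (subst s b)
  end.

(* Syntactic degree: a polynomial has degree <= d iff it is represented by a
   term of syntactic degree <= d. *)
Fixpoint tdeg (K : Type) (t : term K) : nat :=
  match t with
  | Var _ => 1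
  | Zero => 0
  | Add a b => maxn (tdeg a) (tdeg b)
  | Scal _ a => tdeg a
  | Mul a b => (tdeg a + tdeg b)%N
  end.

(* Terms modulo
   [tcong I] form the free algebra (on countably many generators) of the
   variety defined by I; [tcong I f Zero] says f lies in the T-ideal
   generated by I, i.e. f is a consequence of the identities I. *)
Inductive tcong (K : fieldType) (I : term K -> Prop) : term K -> term K -> Prop :=
| tc_refl a : tcong I a a
| tc_sym a b : tcong I a b -> tcong I b a
| tc_trans a b c : tcong I a b -> tcong I b c -> tcong I a c
| tc_add a a' b b' : tcong I a a' -> tcong I b b' -> tcong I (Add a b) (Add a' b')
| tc_scal k a a' : tcong I a a' -> tcong I (Scal k a) (Scal k a')
| tc_mul a a' b b' : tcong I a a' -> tcong I b b' -> tcong I (Mul a b) (Mul a' b')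
| tc_addA a b c : tcong I (Add a (Add b c)) (Add (Add a b) c)
| tc_addC a b : tcong I (Add a b) (Add b a)
| tc_add0 a : tcong I (Add Zero a) a
| tc_addN a : tcong I (Add a (Scal (-1) a)) Zero
| tc_scal1 a : tcong I (Scal 1 a) a
| tc_scalA k l a : tcong I (Scal k (Scal l a)) (Scal (k * l) a)
| tc_scalDr k a b : tcong I (Scal k (Add a b)) (Add (Scal k a) (Scal k b))
| tc_scalDl k l a : tcong I (Scal (k + l) a) (Add (Scal k a) (Scal l a))
| tc_mulDl a b c : tcong I (Mul (Add a b) c) (Add (Mul a c) (Mul b c))
| tc_mulDr a b c : tcong I (Mul a (Add b c)) (Add (Mul a b) (Mul a c))
| tc_mulZl k a b : tcong I (Mul (Scal k a) b) (Scal k (Mul a b))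
| tc_mulZr k a b : tcong I (Mul a (Scal k b)) (Scal k (Mul a b))
| tc_ident p s : I p -> tcong I (subst s p) Zero.

Definition Sub (K : fieldType) (a b : term K) : term K := Add a (Scal (-1) b).

Fixpoint evalC (K : fieldType) (s : nat -> term K) (t : term K) : term K :=
  match t with
  | Var n => s n
  | Zero => Zero
  | Add a b => Add (evalC s a) (evalC s b)
  | Scal c a => Scal c (evalC s a)
  | Mul a b => let a' := evalC s a in let b' := evalC s b in
               Sub (Mul a' b') (Mul b' a')
  end.

Definition x0 {K : Type} : term K := Var 0.
Definition x1 {K : Type} : term K := Var 1.
Definition x2 {K : Type} : term K := Var 2.

Definition assoc (K : fieldType) (a b c : term K) : term K :=
  Sub (Mul (Mul a b) c) (Mul a (Mul b c)).

Definition LS_A1_ids (K : fieldType) (p : term K) : Prop :=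
  p = Sub (assoc x0 x1 x2) (assoc x1 x0 x2) \/
  p = Add (Mul (Mul x0 x1) x2) (Add (Mul (Mul x1 x0) x2)
      (Add (Mul (Mul x0 x2) x1) (Add (Mul (Mul x2 x0) x1)
      (Add (Mul (Mul x1 x2) x0) (Mul (Mul x2 x1) x0))))).

Definition Lie_ids (K : fieldType) (p : term K) : Prop :=
  p = Mul x0 x0 \/
  p = Add (Mul (Mul x0 x1) x2) (Add (Mul (Mul x1 x2) x0) (Mul (Mul x2 x0) x1)).

Definition comm_identity_LS_A1 (K : fieldType) (f : term K) : Prop :=
  forall s : nat -> term K, tcong (@LS_A1_ids K) (evalC s f) Zero.

(* Main.v *)
From HB Require Import structures.
Require Import Defs.
From mathcomp Require Import all_boot all_order all_algebra.
From mathcomp Require boolp.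
From mathcomp Require Import ring zify.
From Stdlib Require Import ClassicalEpsilon ProofIrrelevance FunctionalExtensionality PropExtensionality.
Set Implicit Arguments. Unset Strict Implicit. Unset Printing Implicit Defensive.
Import GRing.Theory.
Local Open Scope ring_scope.

(* Proof outline:
   1. Quotient TQ I of terms modulo tcong I, an lmodType with bilinear product.
   2. Dynkin-Specht-Wever style: D t ~ rho(alpha t) modulo the Lie identities,
      where alpha t is the associative (commutator) expansion of t.
   3. Graded decomposition + Vandermonde: if all coefficients of alpha f vanish
      and tdeg f <= 4 then f ~ 0 modulo Lie identities.
   4. A concrete 31-dimensional LS_A1 algebra (structure constants verified by
      computation) with a chain m_4 -> ... -> m_0 detects every coefficient of
      alpha f through left multiplications. *)

Section Quot.
Variables (K : fieldType) (I : term K -> Prop).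
Local Notation tc := (tcong I).

Definition canon (t : term K) : term K :=
  epsilon (inhabits (@Zero K)) (fun s => tc s t).
Lemma canonP t : tc (canon t) t.
Proof. by apply: (epsilon_spec (inhabits (@Zero K)) (fun s => tc s t)); exists t; apply: tc_refl. Qed.
Lemma canon_eq t t' : tc t t' -> canon t = canon t'.
Proof.
move=> H; rewrite /canon.
have -> : (fun s => tc s t) = (fun s => tc s t'); last by [].
apply: functional_extensionality => s; apply: propositional_extensionality; split=> Hs.
  exact: tc_trans Hs H.
exact: tc_trans Hs (tc_sym H).
Qed.
Lemma canon_idem t : canon (canon t) = canon t.
Proof. exact: canon_eq (canonP t). Qed.

Record TQ := MkQ { qval : term K; qvalP : canon qval = qval }.
Definition tpi (t : term K) : TQ := MkQ (canon_idem t).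
Lemma Q_eq (x y : TQ) : qval x = qval y -> x = y.
Proof. case: x => x px; case: y => y py /= E; subst y; congr MkQ; exact: proof_irrelevance. Qed.
Lemma piK (x : TQ) : tpi (qval x) = x.
Proof. apply: Q_eq => /=; exact: qvalP. Qed.
Lemma pi_eq t t' : tc t t' -> tpi t = tpi t'.
Proof. by move=> H; apply: Q_eq => /=; apply: canon_eq. Qed.
Lemma eq_pi t t' : tpi t = tpi t' -> tc t t'.
Proof.
move=> /(congr1 qval) /= E.
apply: tc_trans (tc_sym (canonP t)) _; rewrite E; exact: canonP.
Qed.
Lemma qvalE (x : TQ) : tc (qval x) (qval x). Proof. exact: tc_refl. Qed.
Lemma pi_qval t : tc (qval (tpi t)) t. Proof. exact: canonP. Qed.

HB.instance Definition _ := boolp.gen_eqMixin TQ.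
HB.instance Definition _ := boolp.gen_choiceMixin TQ.

Definition qadd (x y : TQ) := tpi (Add (qval x) (qval y)).
Definition qopp (x : TQ) := tpi (Scal (-1) (qval x)).
Definition qzero := tpi Zero.
Definition qscale (k : K) (x : TQ) := tpi (Scal k (qval x)).
Definition qmul (x y : TQ) := tpi (Mul (qval x) (qval y)).

Lemma piD a b : tpi (Add a b) = qadd (tpi a) (tpi b).
Proof. apply: pi_eq; apply: tc_add; apply: tc_sym; exact: pi_qval. Qed.
Lemma piZ k a : tpi (Scal k a) = qscale k (tpi a).
Proof. apply: pi_eq; apply: tc_scal; apply: tc_sym; exact: pi_qval. Qed.
Lemma piM a b : tpi (Mul a b) = qmul (tpi a) (tpi b).
Proof. apply: pi_eq; apply: tc_mul; apply: tc_sym; exact: pi_qval. Qed.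

Lemma Qind (P : TQ -> Prop) : (forall t, P (tpi t)) -> forall x, P x.
Proof. by move=> H x; rewrite -(piK x). Qed.

Lemma qaddA : associative qadd.
Proof. elim/Qind=> a; elim/Qind=> b; elim/Qind=> c; rewrite -!piD; apply: pi_eq; exact: tc_addA. Qed.
Lemma qaddC : commutative qadd.
Proof. elim/Qind=> a; elim/Qind=> b; rewrite -!piD; apply: pi_eq; exact: tc_addC. Qed.
Lemma qadd0 : left_id qzero qadd.
Proof. elim/Qind=> a; rewrite -!piD; apply: pi_eq; exact: tc_add0. Qed.
Lemma qaddN : left_inverse qzero qopp qadd.
Proof.
elim/Qind=> a; rewrite /qadd /qopp /qzero; apply: pi_eq.
apply: tc_trans (tc_addC I _ _) _; apply: (tc_trans _ (tc_addN I a)).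
apply: tc_add; first exact: pi_qval.
apply: tc_trans (pi_qval _) _; apply: tc_scal; exact: pi_qval.
Qed.
HB.instance Definition _ := GRing.isZmodule.Build TQ qaddA qaddC qadd0 qaddN.

Lemma qscaleA a b v : qscale a (qscale b v) = qscale (a * b) v.
Proof. elim/Qind: v => v; rewrite -!piZ; apply: pi_eq; exact: tc_scalA. Qed.
Lemma qscale1 : left_id 1 qscale.
Proof. elim/Qind=> v; rewrite -!piZ; apply: pi_eq; exact: tc_scal1. Qed.
Lemma qscaleDr : right_distributive qscale +%R.
Proof. move=> k; elim/Qind=> a; elim/Qind=> b; rewrite /GRing.add /= -piD -!piZ -piD; apply: pi_eq; exact: tc_scalDr. Qed.
Lemma qscaleDl v : {morph qscale^~ v: a b / a + b}.
Proof. elim/Qind: v => v a b; rewrite /GRing.add /= -!piZ -piD; apply: pi_eq; exact: tc_scalDl. Qed.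
HB.instance Definition _ := GRing.Zmodule_isLmodule.Build K TQ qscaleA qscale1 qscaleDr qscaleDl.

Lemma piDE a b : tpi (Add a b) = tpi a + tpi b. Proof. exact: piD. Qed.
Lemma piZE k a : tpi (Scal k a) = k *: tpi a. Proof. exact: piZ. Qed.
Lemma pi0E : tpi Zero = 0. Proof. by []. Qed.

Lemma qmulDl : left_distributive qmul +%R.
Proof.
elim/Qind=> a; elim/Qind=> b; elim/Qind=> c.
transitivity (tpi (Mul (Add a b) c)); first by rewrite piM piDE.
transitivity (tpi (Add (Mul a c) (Mul b c))); first by apply: pi_eq; exact: tc_mulDl.
by rewrite piDE !piM.
Qed.
Lemma qmulDr : right_distributive qmul +%R.
Proof.
elim/Qind=> a; elim/Qind=> b; elim/Qind=> c.
transitivity (tpi (Mul a (Add b c))); first by rewrite piM piDE.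
transitivity (tpi (Add (Mul a b) (Mul a c))); first by apply: pi_eq; exact: tc_mulDr.
by rewrite piDE !piM.
Qed.
Lemma qmulZl k x y : qmul (k *: x) y = k *: qmul x y.
Proof.
elim/Qind: x => a; elim/Qind: y => b.
transitivity (tpi (Mul (Scal k a) b)); first by rewrite piM piZE.
transitivity (tpi (Scal k (Mul a b))); first by apply: pi_eq; exact: tc_mulZl.
by rewrite piZE !piM.
Qed.
Lemma qmulZr k x y : qmul x (k *: y) = k *: qmul x y.
Proof.
elim/Qind: x => a; elim/Qind: y => b.
transitivity (tpi (Mul a (Scal k b))); first by rewrite piM piZE.
transitivity (tpi (Scal k (Mul a b))); first by apply: pi_eq; exact: tc_mulZr.
by rewrite piZE !piM.
Qed.
End Quot.


Section Alpha.
Variable K : fieldType.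
Notation word := (seq nat).
Definition mulL (L1 L2 : seq (word * K)) : seq (word * K) :=
  [seq (p.1 ++ q.1, p.2 * q.2) | p <- L1, q <- L2].
Definition scaleL (c : K) (L : seq (word * K)) := [seq (p.1, c * p.2) | p <- L].
Fixpoint alpha (t : term K) : seq (word * K) :=
  match t with
  | Var x => [:: ([:: x], 1)]
  | Zero => [::]
  | Add a b => alpha a ++ alpha b
  | Scal c a => scaleL c (alpha a)
  | Mul a b => mulL (alpha a) (alpha b) ++ scaleL (-1) (mulL (alpha b) (alpha a))
  end.
Definition coef (L : seq (word * K)) (w : word) : K := \sum_(p <- L) (p.1 == w)%:R * p.2.

Lemma mem_mulL L1 L2 z : z \in mulL L1 L2 ->
  exists p q, [/\ p \in L1, q \in L2 & z = (p.1 ++ q.1, p.2 * q.2)].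
Proof. by case/allpairsP => -[p q] [/= pL qL ->]; exists p, q. Qed.
Lemma mem_scaleL c L z : z \in scaleL c L -> exists2 p, p \in L & z = (p.1, c * p.2).
Proof. by case/mapP => p pL ->; exists p. Qed.

Lemma alpha_size t z : z \in alpha t -> (0 < size z.1 <= tdeg t)%N.
Proof.
elim: t z => [x||a iha b ihb|c a iha|a iha b ihb] z /=.
- by rewrite inE => /eqP ->.
- by [].
- rewrite mem_cat => /orP[/iha|/ihb] /andP[-> h] /=; apply: (leq_trans h);
  by rewrite ?leq_maxl ?leq_maxr.
- by case/mem_scaleL => p /iha h ->.
- rewrite mem_cat => /orP[/mem_mulL|/mem_scaleL[z' /mem_mulL]].
  + case=> p [q [/iha /andP[p0 p1] /ihb /andP[q0 q1] ->]] /=.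
    by rewrite size_cat addn_gt0 p0 leq_add.
  + case=> p [q [/ihb /andP[p0 p1] /iha /andP[q0 q1] ->]] -> /=.
    by rewrite size_cat addn_gt0 p0 addnC leq_add.
Qed.
Lemma alpha_nonempty t : all (fun p => 0 < size p.1)%N (alpha t).
Proof. by apply/allP => z /alpha_size /andP[]. Qed.
End Alpha.

Section FreeLevel.
Variables (K : fieldType) (I : term K -> Prop).
Local Notation QQ := (TQ I).
Local Notation word := (seq nat).
Local Notation tpi := (tpi I).
Local Notation qmul := (@qmul K I).

Lemma qmul0l y : qmul 0 y = 0.
Proof. have -> : (0 : QQ) = 0 *: 0 by rewrite scale0r. by rewrite qmulZl !scale0r. Qed.
Lemma qmul0r y : qmul y 0 = 0.
Proof. have -> : (0 : QQ) = 0 *: 0 by rewrite scale0r. by rewrite qmulZr !scale0r. Qed.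
Lemma qmulNl x y : qmul (- x) y = - qmul x y.
Proof. by rewrite -scaleN1r qmulZl scaleN1r. Qed.
Lemma qmulNr x y : qmul x (- y) = - qmul x y.
Proof. by rewrite -scaleN1r qmulZr scaleN1r. Qed.
Lemma qmulBl x y z : qmul (x - y) z = qmul x z - qmul y z.
Proof. by rewrite qmulDl qmulNl. Qed.
Lemma qmulBr x y z : qmul z (x - y) = qmul z x - qmul z y.
Proof. by rewrite qmulDr qmulNr. Qed.
Lemma qmul_suml (J : Type) (r : seq J) (F : J -> QQ) y :
  qmul (\sum_(i <- r) F i) y = \sum_(i <- r) qmul (F i) y.
Proof. elim: r => [|i r IH]; rewrite ?big_nil ?qmul0l // !big_cons qmulDl IH //. Qed.
Lemma qmul_sumr (J : Type) (r : seq J) (F : J -> QQ) y :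
  qmul y (\sum_(i <- r) F i) = \sum_(i <- r) qmul y (F i).
Proof. elim: r => [|i r IH]; rewrite ?big_nil ?qmul0r // !big_cons qmulDr IH //. Qed.

Definition rdot (q : QQ) (w : word) : QQ := foldl (fun t x => qmul t (tpi (Var x))) q w.
Lemma rdotD q1 q2 w : rdot (q1 + q2) w = rdot q1 w + rdot q2 w.
Proof. by elim: w q1 q2 => [|x w IH] q1 q2 //=; rewrite qmulDl IH. Qed.
Lemma rdotZ k q w : rdot (k *: q) w = k *: rdot q w.
Proof. by elim: w q => [|x w IH] q //=; rewrite qmulZl IH. Qed.
Lemma rdot0 w : rdot 0 w = 0.
Proof. have -> : (0 : QQ) = 0 *: 0 by rewrite scale0r. by rewrite rdotZ !scale0r. Qed.
Lemma rdot_sum (J : Type) (r : seq J) (F : J -> QQ) w :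
  rdot (\sum_(i <- r) F i) w = \sum_(i <- r) rdot (F i) w.
Proof. elim: r => [|i r IH]; rewrite ?big_nil ?rdot0 // !big_cons rdotD IH //. Qed.
Lemma rdot_cat q u v : rdot q (u ++ v) = rdot (rdot q u) v.
Proof. by rewrite /rdot foldl_cat. Qed.

Definition rhow (w : word) : QQ := if w is x :: w' then rdot (tpi (Var x)) w' else 0.
Lemma rhow_cat u v : (0 < size u)%N -> rhow (u ++ v) = rdot (rhow u) v.
Proof. by case: u => [|x u] //= _; rewrite rdot_cat. Qed.

Definition QL (q : QQ) (L : seq (word * K)) : QQ := \sum_(p <- L) p.2 *: rdot q p.1.
Definition rhoL (L : seq (word * K)) : QQ := \sum_(p <- L) p.2 *: rhow p.1.

Lemma QL_cat q L1 L2 : QL q (L1 ++ L2) = QL q L1 + QL q L2.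
Proof. by rewrite /QL big_cat. Qed.
Lemma QL_scaleL q c L : QL q (scaleL c L) = c *: QL q L.
Proof. by rewrite /QL big_map scaler_sumr; apply: eq_bigr => p _ /=; rewrite scalerA. Qed.
Lemma QLD q1 q2 L : QL (q1 + q2) L = QL q1 L + QL q2 L.
Proof. by rewrite /QL -big_split; apply: eq_bigr => p _; rewrite rdotD scalerDr. Qed.
Lemma QLZ k q L : QL (k *: q) L = k *: QL q L.
Proof. by rewrite /QL scaler_sumr; apply: eq_bigr => p _; rewrite rdotZ !scalerA mulrC. Qed.
Lemma QL_sum (J : Type) (r : seq J) (F : J -> QQ) L :
  QL (\sum_(i <- r) F i) L = \sum_(i <- r) QL (F i) L.
Proof.
elim: r => [|i r IH]; last by rewrite !big_cons QLD IH.
by rewrite !big_nil /QL big1 // => p _; rewrite rdot0 scaler0.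
Qed.
Lemma QL_mulL q L1 L2 : QL q (mulL L1 L2) = QL (QL q L1) L2.
Proof.
rewrite [LHS]/QL /mulL big_allpairs_dep /= [QL q L1]/QL QL_sum.
by apply: eq_bigr => p _; rewrite QLZ /QL scaler_sumr; apply: eq_bigr => r _;
  rewrite rdot_cat scalerA.
Qed.
Lemma rhoL_cat L1 L2 : rhoL (L1 ++ L2) = rhoL L1 + rhoL L2.
Proof. by rewrite /rhoL big_cat. Qed.
Lemma rhoL_scaleL c L : rhoL (scaleL c L) = c *: rhoL L.
Proof. by rewrite /rhoL big_map scaler_sumr; apply: eq_bigr => p _ /=; rewrite scalerA. Qed.
Lemma rhoL_mulL L1 L2 : all (fun p => 0 < size p.1)%N L1 ->
  rhoL (mulL L1 L2) = QL (rhoL L1) L2.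
Proof.
move=> /allP H; rewrite [LHS]/rhoL /mulL big_allpairs_dep /= [rhoL L1]/rhoL QL_sum big_seq [RHS]big_seq.
apply: eq_bigr => p /H p0; rewrite QLZ /QL scaler_sumr; apply: eq_bigr => r _ /=.
by rewrite rhow_cat // scalerA.
Qed.
End FreeLevel.

Fixpoint Dt (K : Type) (t : term K) : term K :=
  match t with
  | Var x => Var x
  | Zero => Zero
  | Add a b => Add (Dt a) (Dt b)
  | Scal c a => Scal c (Dt a)
  | Mul a b => Add (Mul (Dt a) b) (Mul a (Dt b))
  end.

Section LieLevel.
Variable K : fieldType.
Local Notation Lie := (@Lie_ids K).
Local Notation QQ := (TQ Lie).
Local Notation pi := (tpi Lie).
Local Notation qmul := (@qmul K Lie).

Lemma qmulxx x : qmul x x = 0.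
Proof.
elim/Qind: x => a; rewrite -piM.
apply: (pi_eq (t' := Zero)).
exact: (@tc_ident K Lie (Mul x0 x0) (fun _ => a) (or_introl erefl)).
Qed.
Lemma qmulC x y : qmul x y = - qmul y x.
Proof.
have := qmulxx (x + y); rewrite qmulDl !qmulDr !qmulxx add0r addr0.
by move/eqP; rewrite addr_eq0 => /eqP.
Qed.
Lemma qjacobi x y z : qmul (qmul x y) z + (qmul (qmul y z) x + qmul (qmul z x) y) = 0.
Proof.
elim/Qind: x => a; elim/Qind: y => b; elim/Qind: z => c; rewrite -!piM -!piDE.
apply: (pi_eq (t' := Zero)).
exact: (@tc_ident K Lie _ (fun n => if n is 0 then a else if n is 1 then b else c) (or_intror erefl)).
Qed.
Lemma qmul_r x y z : qmul z (qmul x y) = qmul (qmul z x) y - qmul (qmul z y) x.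
Proof.
have := qjacobi z x y; rewrite [qmul (qmul x y) z]qmulC [qmul y z]qmulC qmulNl.
rewrite addrA => /eqP; rewrite subr_eq0 => /eqP <-.
by rewrite opprB addrC subrK.
Qed.

Lemma QL_alpha q b : QL q (alpha b) = qmul q (pi b).
Proof.
elim: b q => [x||a iha b ihb|c a iha|a iha b ihb] q /=.
- by rewrite /QL big_seq1 scale1r.
- by rewrite /QL big_nil qmul0r.
- by rewrite QL_cat iha ihb piDE qmulDr.
- by rewrite QL_scaleL iha piZE qmulZr.
- rewrite QL_cat QL_scaleL !QL_mulL iha ihb iha ihb piM qmul_r.
  by rewrite scaleN1r.
Qed.

Lemma Dt_rho g : pi (Dt g) = rhoL Lie (alpha g).
Proof.
elim: g => [x||a iha b ihb|c a iha|a iha b ihb] /=.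
- by rewrite /rhoL big_seq1 scale1r.
- by rewrite /rhoL big_nil.
- by rewrite rhoL_cat piDE iha ihb.
- by rewrite rhoL_scaleL piZE iha.
- rewrite piDE !piM rhoL_cat rhoL_scaleL !rhoL_mulL ?alpha_nonempty //.
  rewrite !QL_alpha -iha -ihb scaleN1r; congr (_ + _).
  by rewrite qmulC.
Qed.
End LieLevel.

Section Coef.
Variable K : fieldType.
Local Notation word := (seq nat).
Local Notation coef := (@coef K).

Lemma pick1 (V : lmodType K) (W : seq word) (u : word) (F : word -> V) :
  uniq W -> u \in W -> \sum_(w <- W) (u == w)%:R *: F w = F u.
Proof.
move=> uW uin; rewrite (big_rem u uin) /= eqxx scale1r big1_seq ?addr0 // => w /andP[_ win].
have : w != u by apply: contraTneq win => ->; rewrite mem_rem_uniqF.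
by rewrite eq_sym => /negPf ->; rewrite scale0r.
Qed.

Lemma group_sum (V : lmodType K) (L : seq (word * K)) (F : word -> V) (W : seq word) :
  uniq W -> {subset [seq p.1 | p <- L] <= W} ->
  \sum_(p <- L) p.2 *: F p.1 = \sum_(w <- W) coef L w *: F w.
Proof.
move=> uW sub; rewrite /coef.
under [RHS]eq_bigr do rewrite scaler_suml.
rewrite exchange_big /= big_seq [RHS]big_seq; apply: eq_bigr => p pL.
under eq_bigr do rewrite mulrC -scalerA.
rewrite -scaler_sumr pick1 //; apply: sub; exact: map_f.
Qed.

Lemma pick1K (W : seq word) (u : word) (F : word -> K) :
  uniq W -> u \in W -> \sum_(w <- W) (u == w)%:R * F w = F u.
Proof.
move=> uW uin; rewrite (big_rem u uin) /= eqxx mul1r big1_seq ?addr0 // => w /andP[_ win].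
have : w != u by apply: contraTneq win => ->; rewrite mem_rem_uniqF.
by rewrite eq_sym => /negPf ->; rewrite mul0r.
Qed.

Lemma group_sumK (L : seq (word * K)) (F : word -> K) (W : seq word) :
  uniq W -> {subset [seq p.1 | p <- L] <= W} ->
  \sum_(p <- L) p.2 * F p.1 = \sum_(w <- W) coef L w * F w.
Proof.
move=> uW sub; rewrite /coef.
under [RHS]eq_bigr do rewrite big_distrl.
rewrite exchange_big /= big_seq [RHS]big_seq; apply: eq_bigr => p pL.
under eq_bigr do rewrite mulrAC.
rewrite -big_distrl /= pick1K 1?mulrC //; apply: sub; exact: map_f.
Qed.

Definition ceq (L L' : seq (word * K)) := forall w, coef L w = coef L' w.

Lemma ceq_sumK (L L' : seq (word * K)) (F : word -> K) : ceq L L' ->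
  \sum_(p <- L) p.2 * F p.1 = \sum_(p <- L') p.2 * F p.1.
Proof.
move=> E; set W := undup [seq p.1 | p <- L ++ L'].
rewrite (@group_sumK L F W) ?undup_uniq // ?(@group_sumK L' F W) ?undup_uniq //.
- by apply: eq_bigr => w _; rewrite E.
- by move=> w wL; rewrite mem_undup map_cat mem_cat wL orbT.
- by move=> w wL; rewrite mem_undup map_cat mem_cat wL.
Qed.

Lemma coef0_sum (V : lmodType K) (L : seq (word * K)) (F : word -> V) :
  (forall w, coef L w = 0) -> \sum_(p <- L) p.2 *: F p.1 = 0.
Proof.
move=> E; rewrite (@group_sum V L F (undup [seq p.1 | p <- L])) ?undup_uniq //.
  by rewrite big1 // => w _; rewrite E scale0r.
by move=> w; rewrite mem_undup.
Qed.

Lemma coef_cat L1 L2 w : coef (L1 ++ L2) w = coef L1 w + coef L2 w.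
Proof. by rewrite /coef big_cat. Qed.
Lemma coef_scaleL c L w : coef (scaleL c L) w = c * coef L w.
Proof. by rewrite /coef big_map mulr_sumr; apply: eq_bigr => p _ /=; rewrite mulrCA. Qed.

Lemma coef_mulL L1 L2 w :
  coef (mulL L1 L2) w = \sum_(p <- L1) p.2 * \sum_(q <- L2) (p.1 ++ q.1 == w)%:R * q.2.
Proof.
rewrite /coef /mulL big_allpairs_dep /=; apply: eq_bigr => p _.
by rewrite mulr_sumr; apply: eq_bigr => q _; rewrite mulrCA mulrA.
Qed.
Lemma coef_mulL' L1 L2 w :
  coef (mulL L1 L2) w = \sum_(q <- L2) q.2 * \sum_(p <- L1) (p.1 ++ q.1 == w)%:R * p.2.
Proof.
rewrite coef_mulL.
under eq_bigr do rewrite mulr_sumr.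
rewrite exchange_big /=; apply: eq_bigr => q _; rewrite mulr_sumr.
by apply: eq_bigr => p _; ring.
Qed.

Lemma ceq_mulL_l L1 L1' L2 : ceq L1 L1' -> ceq (mulL L1 L2) (mulL L1' L2).
Proof. by move=> E w; rewrite !coef_mulL (ceq_sumK (fun u => \sum_(q <- L2) (u ++ q.1 == w)%:R * q.2) E). Qed.
Lemma ceq_mulL_r L1 L2 L2' : ceq L2 L2' -> ceq (mulL L1 L2) (mulL L1 L2').
Proof. by move=> E w; rewrite !coef_mulL' (ceq_sumK (fun v => \sum_(p <- L1) (p.1 ++ v == w)%:R * p.2) E). Qed.

Definition EL (L : seq (word * K)) := [seq (p.1, (size p.1)%:R * p.2) | p <- L].
Lemma coef_EL L w : coef (EL L) w = (size w)%:R * coef L w.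
Proof.
rewrite /coef big_map mulr_sumr; apply: eq_bigr => p _ /=.
by case: eqP => [->|_]; rewrite ?mul0r ?mulr0 // !mul1r.
Qed.
Lemma coef_mulL_E L1 L2 w :
  coef (mulL (EL L1) L2) w + coef (mulL L1 (EL L2)) w = (size w)%:R * coef (mulL L1 L2) w.
Proof.
rewrite /coef /mulL /EL !big_allpairs_dep !big_map /= -big_split mulr_sumr.
apply: eq_bigr => p _; rewrite big_map -big_split mulr_sumr; apply: eq_bigr => q _ /=.
case: eqP => [<-|_]; last by rewrite !mul0r addr0 mulr0.
by rewrite size_cat natrD; ring.
Qed.

Lemma alpha_Dt g w : coef (alpha (Dt g)) w = (size w)%:R * coef (alpha g) w.
Proof.
elim: g w => [x||a iha b ihb|c a iha|a iha b ihb] w /=.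
- by rewrite /coef !big_seq1 /=; case: eqP => [<-|_] /=; ring.
- by rewrite /coef !big_nil mulr0.
- by rewrite !coef_cat iha ihb mulrDr.
- by rewrite !coef_scaleL iha mulrCA.
have Ea : ceq (alpha (Dt a)) (EL (alpha a)) by move=> v; rewrite iha coef_EL.
have Eb : ceq (alpha (Dt b)) (EL (alpha b)) by move=> v; rewrite ihb coef_EL.
rewrite !coef_cat !coef_scaleL (ceq_mulL_l _ Ea) (ceq_mulL_r _ Ea).
rewrite (ceq_mulL_l _ Eb) (ceq_mulL_r _ Eb).
rewrite mulrDr mulrCA -!coef_mulL_E; ring.
Qed.
End Coef.


Lemma ac9 (V : zmodType) (A1 A2 A3 B1 B2 B3 C1 C2 C3 : V) :
  ((A1 + A2) + A3) + (((B1 + B2) + B3) + ((C1 + C2) + C3)) =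
  (A1 + (B3 + C2)) + (A2 + (B1 + C3)) + (A3 + (B2 + C1)).
Proof.
set x := [:: A1; A2; A3; B1; B2; B3; C1; C2; C3].
have H : \sum_(i <- [:: 0; 1; 2; 3; 4; 5; 6; 7; 8]%N) nth 0 x i =
          \sum_(i <- [:: 0; 5; 7; 1; 3; 8; 2; 4; 6]%N) nth 0 x i by apply: perm_big.
move: H; rewrite !big_cons big_nil /= !addr0.
by rewrite -!addrA.
Qed.

Section DCompat.
Variable K : fieldType.
Local Notation Lie := (@Lie_ids K).
Local Notation pi := (tpi Lie).
Local Notation qmul := (@qmul K Lie).

Lemma Dt_compat a b : tcong Lie a b -> pi (Dt a) = pi (Dt b).
Proof.
elim=> {a b} /=.
- by [].
- by move=> a b _ ->.
- by move=> a b c _ -> _ ->.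
- by move=> a a' b b' _ E1 _ E2; rewrite !piDE E1 E2.
- by move=> k a a' _ E; rewrite !piZE E.
- move=> a a' b b' H1 E1 H2 E2; rewrite !piDE !piM E1 E2 (pi_eq H1) (pi_eq H2) //.
- by move=> a b c; rewrite !piDE addrA.
- by move=> a b; rewrite !piDE addrC.
- by move=> a; rewrite !piDE add0r.
- by move=> a; rewrite !piDE piZE scaleN1r subrr.
- by move=> a; rewrite piZE scale1r.
- by move=> k l a; rewrite !piZE scalerA.
- by move=> k a b; rewrite !piZE !piDE scalerDr !piZE.
- by move=> k l a; rewrite !piZE !piDE !piZE scalerDl.
- by move=> a b c; rewrite !piDE !piM !piDE !qmulDl addrACA.
- by move=> a b c; rewrite !piDE !piM !piDE !qmulDr addrACA.
- by move=> k a b; rewrite !piDE !piM !piZE !piDE !piM !qmulZl scalerDr.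
- by move=> k a b; rewrite !piDE !piM !piZE !piDE !piM !qmulZr scalerDr.
- move=> p s [->|->] /=.
  + by rewrite piDE !piM [qmul (pi (s 0%N)) _]qmulC subrr.
  + rewrite !piDE !piM !piDE !piM !qmulDl ac9.
    by rewrite !qjacobi !addr0.
Qed.
End DCompat.

Fixpoint addl (K : Type) (s t : seq (term K)) : seq (term K) :=
  match s, t with
  | x :: s', y :: t' => Add x y :: addl s' t'
  | [::], _ => t
  | _, [::] => s
  end.
Fixpoint conv (K : Type) (s t : seq (term K)) : seq (term K) :=
  match s with
  | [::] => [::]
  | x :: s' => addl [seq Mul x y | y <- t] (Zero :: conv s' t)
  end.
Fixpoint gt (K : Type) (t : term K) : seq (term K) :=
  match t with
  | Var x => [:: Zero; Var x]
  | Zero => [:: Zero]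
  | Add a b => addl (gt a) (gt b)
  | Scal c a => [seq Scal c y | y <- gt a]
  | Mul a b => conv (gt a) (gt b)
  end.

Section Graded.
Variables (K : fieldType) (I : term K -> Prop).
Local Notation pi := (tpi I).
Local Notation qmul := (@qmul K I).
Local Notation sumt s := (\sum_(x <- s) pi x).

Lemma sum_addl s t : sumt (addl s t) = sumt s + sumt t.
Proof.
elim: s t => [|x s IH] [|y t] /=; rewrite ?big_nil ?add0r ?addr0 //.
by rewrite !big_cons IH piDE addrACA.
Qed.
Lemma sum_conv s t : sumt (conv s t) = qmul (sumt s) (sumt t).
Proof.
elim: s => [|x s IH] /=; first by rewrite !big_nil qmul0l.
rewrite sum_addl [sumt (Zero :: _)]big_cons pi0E add0r IH big_map [sumt (x :: s)]big_cons qmulDl.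
congr (_ + _).
by rewrite qmul_sumr; apply: eq_bigr => y _; rewrite piM.
Qed.
Lemma gt_sum t : pi t = sumt (gt t).
Proof.
elim: t => [x||a iha b ihb|c a iha|a iha b ihb] /=.
- by rewrite !big_cons big_nil pi0E add0r addr0.
- by rewrite big_cons big_nil addr0.
- by rewrite sum_addl piDE iha ihb.
- by rewrite big_map piZE iha scaler_sumr; apply: eq_bigr => y _; rewrite piZE.
- by rewrite sum_conv piM iha ihb.
Qed.

Lemma size_addl (s t : seq (term K)) : size (addl s t) = maxn (size s) (size t).
Proof. by elim: s t => [|x s IH] [|y t] //=; rewrite ?maxn0 ?max0n // IH maxnSS. Qed.
Lemma size_conv (s t : seq (term K)) : (0 < size t)%N -> (size (conv s t) <= (size s + size t).-1)%N.
Proof.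
move=> t0; elim: s => [|x s IH] //=.
rewrite size_addl size_map /= geq_max; apply/andP; split; lia.
Qed.
Lemma size_gt (t : term K) : (0 < size (gt t) <= (tdeg t).+1)%N.
Proof.
elim: t => [x||a iha b ihb|c a iha|a iha b ihb] //=.
- rewrite size_addl; lia.
- by rewrite size_map.
- case/andP: iha => a0 a1; case/andP: ihb => b0 b1.
  case E: (gt a) a0 a1 => [|x s] // _ a1.
  rewrite /= size_addl size_map /=.
  rewrite /= in a1; have := size_conv s b0; lia.
Qed.

Fixpoint eig (o : nat) (s : seq (term K)) : Prop :=
  match s with
  | [::] => True
  | x :: s' => pi (Dt x) = o%:R *: pi x /\ eig o.+1 s'
  end.

Lemma eig_addl o s t : eig o s -> eig o t -> eig o (addl s t).
Proof.
elim: s o t => [|x s IH] o [|y t] //= [Ex Es] [Ey Et]; split; last exact: IH.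
by rewrite !piDE Ex Ey scalerDr.
Qed.
Lemma eig_mapMul o1 o2 x t : pi (Dt x) = o1%:R *: pi x -> eig o2 t ->
  eig (o1 + o2) [seq Mul x y | y <- t].
Proof.
move=> Ex; elim: t o2 => [|y t IH] o2 //= [Ey Et]; split; last by rewrite -addnS; exact: IH.
by rewrite piDE !piM Ex Ey qmulZl qmulZr natrD scalerDl.
Qed.
Lemma eig_conv o1 o2 s t : eig o1 s -> eig o2 t -> eig (o1 + o2) (conv s t).
Proof.
elim: s o1 => [|x s IH] o1 //= [Ex Es] Et; apply: eig_addl; first exact: eig_mapMul.
split; first by rewrite /= pi0E scaler0.
by rewrite -addSn; exact: IH.
Qed.
Lemma eig_mapScal o c s : eig o s -> eig o [seq Scal c y | y <- s].
Proof.
elim: s o => [|y s IH] o //= [Ey Es]; split; last exact: IH.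
by rewrite !piZE Ey !scalerA mulrC.
Qed.
Lemma eig_gt t : eig 0 (gt t).
Proof.
elim: t => [x||a iha b ihb|c a iha|a iha b ihb] /=.
- by split; [rewrite pi0E scaler0 | split; [rewrite scale1r|]].
- by split; [rewrite pi0E scaler0|].
- exact: eig_addl.
- exact: eig_mapScal.
- exact: (eig_conv iha ihb).
Qed.
Lemma eig_nth o s n : eig o s -> pi (Dt (nth Zero s n)) = (o + n)%:R *: pi (nth Zero s n).
Proof.
elim: s o n => [|x s IH] o n /=; first by rewrite nth_nil pi0E scaler0.
case=> Ex Es; case: n => [|n] /=; first by rewrite addn0.
by rewrite (IH _ _ Es) addSnnS.
Qed.
Lemma head_gt (t : term K) : pi (nth Zero (gt t) 0) = 0.
Proof.
elim: t => [x||a iha b ihb|c a iha|a iha b ihb] //=.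
- have := size_gt a; have := size_gt b.
  case: (gt a) iha => [|x s]; case: (gt b) ihb => [|y u] //= Hy Hx _ _.
  by rewrite piDE Hx Hy addr0.
- have := size_gt a; case: (gt a) iha => [|x s] //= Hx _.
  by rewrite piZE Hx scaler0.
- have := size_gt a; have := size_gt b.
  case: (gt a) iha => [|x s]; case: (gt b) ihb => [|y u] //= Hy Hx _ _.
  by rewrite piDE pi0E piM Hx qmul0l addr0.
Qed.
End Graded.


Section LieComplete.
Variable K : fieldType.
Local Notation Lie := (@Lie_ids K).
Local Notation pi := (tpi Lie).

Definition DQ (x : TQ Lie) : TQ Lie := pi (Dt (qval x)).
Lemma DQ_pi t : DQ (pi t) = pi (Dt t).
Proof. exact/Dt_compat/pi_qval. Qed.
Lemma DQD x y : DQ (x + y) = DQ x + DQ y.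
Proof. by elim/Qind: x => a; elim/Qind: y => b; rewrite -piDE !DQ_pi /= piDE. Qed.
Lemma DQZ k x : DQ (k *: x) = k *: DQ x.
Proof. by elim/Qind: x => a; rewrite -piZE !DQ_pi /= piZE. Qed.
Lemma DQ0 : DQ 0 = 0.
Proof. by rewrite -pi0E DQ_pi. Qed.
Lemma DQ_sum (r : seq nat) (F : nat -> TQ Lie) : DQ (\sum_(i <- r) F i) = \sum_(i <- r) DQ (F i).
Proof. by elim: r => [|i r IH]; rewrite ?big_nil ?DQ0 // !big_cons DQD IH. Qed.

Lemma sum_nth5 (s : seq (term K)) : (size s <= 5)%N ->
  \sum_(t <- s) pi t = \sum_(0 <= n < 5) pi (nth Zero s n).
Proof.
move=> Hs; rewrite (big_nth Zero) [RHS](big_cat_nat (leq0n (size s)) Hs) /=.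
rewrite [X in _ + X]big1_seq ?addr0 // => i /andP[_]; rewrite mem_index_iota => /andP[Hi _].
by rewrite nth_default // pi0E.
Qed.

Lemma coef_iter f j w : coef (alpha (iter j (@Dt K) f)) w = (size w)%:R ^+ j * coef (alpha f) w.
Proof. elim: j => [|j IH] /=; first by rewrite expr0 mul1r. by rewrite alpha_Dt IH exprS mulrA. Qed.

Theorem lie_complete (charK0 : [pchar K] =i pred0) (f : term K) :
  (tdeg f <= 4)%N -> (forall w, coef (alpha f) w = 0) -> tcong Lie f Zero.
Proof.
move=> degf cf.
set s := gt f.
have Hs : (size s <= 5)%N by have := size_gt f; rewrite -/s; lia.
set X := fun n => pi (nth Zero s n).
have X0 : X 0%N = 0 by exact: head_gt.
have H0 : pi f = \sum_(0 <= n < 5) X n by rewrite gt_sum -/s sum_nth5.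
have Ej : forall j, pi (iter j (@Dt K) f) = \sum_(0 <= n < 5) (n%:R ^+ j) *: X n.
  elim=> [|j IH]; first by rewrite H0; apply: eq_bigr => n _; rewrite expr0 scale1r.
  rewrite iterS -DQ_pi IH DQ_sum; apply: eq_bigr => n _.
  rewrite DQZ /X DQ_pi (@eig_nth K Lie 0 s n (eig_gt Lie f)) add0n scalerA exprS mulrC //.
have Zj : forall j, \sum_(0 <= n < 5) (n%:R ^+ j.+1) *: X n = 0.
  move=> j; rewrite -Ej iterS Dt_rho; apply: coef0_sum => w.
  by rewrite coef_iter cf mulr0.
have n24 : (24%:R : K) != 0 by move/pcharf0P: charK0 => ->.
apply: (@eq_pi K Lie); rewrite pi0E.
apply: (scalerI n24).
rewrite scaler0 H0.
have -> : (24%:R : K) *: \sum_(0 <= n < 5) X n =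
   50%:R *: \sum_(0 <= n < 5) (n%:R ^+ 1) *: X n - 35%:R *: \sum_(0 <= n < 5) (n%:R ^+ 2) *: X n
   + 10%:R *: \sum_(0 <= n < 5) (n%:R ^+ 3) *: X n - \sum_(0 <= n < 5) (n%:R ^+ 4) *: X n.
  rewrite !scaler_sumr -sumrB -big_split -sumrB /=.
  apply: eq_big_nat => n /andP[_ Hn].
  rewrite !scalerA -scalerBl -scalerDl -scalerBl.
  case: n Hn => [|n] Hn; first by rewrite X0 !scaler0.
  congr (_ *: _).
  by do 4! (case: n Hn => [|n] Hn; first by ring).
by rewrite !Zj !scaler0 !subr0 addr0.
Qed.
End LieComplete.


Definition tabl : seq (seq (nat * nat * int)) := [::
  [:: ];
  [:: ];
  [:: ];
  [:: ];
  [:: ];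
  [:: (1, 0, Posz 4)];
  [:: (3, 0, Posz 4)];
  [:: (1, 2, Posz 4)];
  [:: (2, 1, Posz 4)];
  [:: (4, 1, Posz 4)];
  [:: (3, 2, Posz 4)];
  [:: (4, 2, Posz 4)];
  [:: (3, 4, Posz 4)];
  [:: (4, 3, Posz 4)];
  [:: (0, 7, Negz 3); (2, 5, Negz 3); (5, 2, Posz 4); (8, 0, Negz 3)];
  [:: (2, 5, Negz 7); (7, 0, Posz 4); (8, 0, Negz 3)];
  [:: (0, 10, Negz 3); (2, 6, Posz 4); (6, 2, Posz 4); (10, 0, Negz 3)];
  [:: (4, 6, Negz 7); (12, 0, Posz 4); (13, 0, Negz 3)];
  [:: (1, 10, Posz 4); (3, 7, Posz 4)];
  [:: (4, 7, Negz 7); (7, 4, Posz 4); (8, 4, Posz 4); (9, 2, Negz 7)];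
  [:: (1, 11, Posz 4); (4, 7, Posz 4)];
  [:: (2, 12, Posz 4); (4, 10, Posz 4); (10, 4, Negz 3); (13, 2, Posz 4)];
  [:: (4, 10, Negz 7); (12, 2, Posz 4); (13, 2, Negz 3)];
  [:: (3, 11, Posz 4); (4, 10, Posz 4)];
  [:: (0, 18, Negz 7); (3, 14, Posz 8); (5, 10, Posz 8); (7, 6, Negz 7); (8, 6, Negz 7); (10, 5, Negz 7); (14, 3, Posz 4); (15, 3, Negz 3); (16, 1, Posz 8); (18, 0, Posz 8)];
  [:: (0, 20, Posz 8); (4, 14, Negz 7); (4, 15, Posz 8); (5, 11, Negz 7); (11, 5, Negz 7); (14, 4, Posz 4); (15, 4, Negz 3); (20, 0, Posz 8)];
  [:: (0, 23, Posz 8); (4, 16, Negz 7); (6, 11, Negz 7); (11, 6, Negz 7); (16, 4, Posz 4); (23, 0, Posz 8)];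
  [:: (0, 22, Negz 3); (0, 23, Negz 7); (2, 17, Posz 4); (6, 11, Posz 8); (11, 6, Posz 8); (17, 2, Posz 4); (22, 0, Negz 3); (23, 0, Negz 7)];
  [:: (1, 21, Posz 4); (1, 23, Posz 12); (3, 19, Negz 1); (3, 20, Posz 12); (4, 18, Posz 20); (7, 12, Posz 2); (8, 12, Negz 1); (9, 10, Posz 4); (13, 7, Posz 4); (18, 4, Negz 3)];
  [:: (1, 22, Posz 4); (4, 18, Negz 7); (12, 7, Posz 4); (13, 7, Negz 3)];
  [:: (0, 28, Posz 4); (0, 29, Posz 14); (1, 26, Negz 1); (1, 27, Negz 5); (3, 25, Posz 2); (4, 24, Posz 4); (5, 21, Negz 3); (5, 22, Negz 7); (5, 23, Negz 3); (6, 19, Posz 2); (6, 20, Negz 7); (7, 17, Negz 2); (8, 17, Posz 3); (9, 16, Negz 3); (12, 14, Negz 7); (12, 15, Posz 3); (13, 14, Posz 4); (13, 15, Negz 0); (14, 12, Posz 1); (14, 13, Posz 1); (15, 12, Negz 2); (15, 13, Negz 0); (16, 9, Posz 2); (17, 7, Negz 5); (19, 6, Posz 2); (20, 6, Negz 7); (21, 5, Negz 3); (22, 5, Negz 1); (23, 5, Negz 3); (24, 4, Posz 1); (25, 3, Negz 0); (26, 1, Negz 1); (28, 0, Posz 4); (29, 0, Posz 8)]].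

Definition tab (k : nat) : seq (nat * nat * int) := nth [::] tabl k.
Notation key3 := (nat * nat * nat)%type.
Definition LL (k : nat) : seq (key3 * int) :=
  [seq ((s.1.1, s.1.2, t.1.2), t.2 * s.2) | t <- tab k, s <- tab t.1.1].
Definition RL (k : nat) : seq (key3 * int) :=
  [seq ((t.1.1, s.1.1, s.1.2), t.2 * s.2) | t <- tab k, s <- tab t.1.2].
Definition pmap3 (f : key3 -> key3) (sg : int) (L : seq (key3 * int)) :=
  [seq (f p.1, sg * p.2) | p <- L].
Definition sw12 (x : key3) : key3 := (x.1.2, x.1.1, x.2).
Definition LSL k := pmap3 id 1 (LL k) ++ pmap3 id (-1) (RL k) ++
  pmap3 sw12 (-1) (LL k) ++ pmap3 sw12 1 (RL k).
(* (ab)c, (ba)c, (ac)b, (ca)b, (bc)a, (cb)a ; key (i,j,l) of (x_i x_j) x_l *)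
Definition pA (x : key3) : key3 := (x.1.1, x.1.2, x.2).
Definition pB (x : key3) : key3 := (x.1.2, x.1.1, x.2).
Definition pC (x : key3) : key3 := (x.1.1, x.2, x.1.2).
Definition pD (x : key3) : key3 := (x.1.2, x.2, x.1.1).
Definition pE (x : key3) : key3 := (x.2, x.1.1, x.1.2).
Definition pF (x : key3) : key3 := (x.2, x.1.2, x.1.1).
Definition A1L k := pmap3 pA 1 (LL k) ++ pmap3 pB 1 (LL k) ++ pmap3 pC 1 (LL k) ++
  pmap3 pD 1 (LL k) ++ pmap3 pE 1 (LL k) ++ pmap3 pF 1 (LL k).
Definition coefZ (T : eqType) (L : seq (T * int)) (x : T) : int :=
  foldr (fun p acc => (if p.1 == x then p.2 else 0) + acc) 0 L.
Definition zerocheck (T : eqType) (L : seq (T * int)) : bool :=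
  all (fun x => coefZ L x == 0) (map fst L).

Lemma LS_check : all (fun k => zerocheck (LSL k)) (iota 0 31).
Proof. by vm_compute. Qed.
Lemma A1_check : all (fun k => zerocheck (A1L k)) (iota 0 31).
Proof. by vm_compute. Qed.
Lemma size_tabl : size tabl = 31%N.
Proof. by []. Qed.

Lemma tab_big k : (31 <= k)%N -> tab k = [::].
Proof. by move=> h; rewrite /tab nth_default // size_tabl. Qed.
Lemma LSL_ok k : zerocheck (LSL k).
Proof.
case: (ltnP k 31) => h.
  by have /allP := LS_check; apply; rewrite mem_iota.
by rewrite /LSL /LL /RL tab_big.
Qed.
Lemma A1L_ok k : zerocheck (A1L k).
Proof.
case: (ltnP k 31) => h.
  by have /allP := A1_check; apply; rewrite mem_iota.
by rewrite /A1L /LL tab_big.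
Qed.

Section Model.
Variable K : fieldType.
Definition M := nat -> K.
Definition mulM (a b : M) : M := fun k => \sum_(t <- tab k) t.2%:~R * (a t.1.1 * b t.1.2).
Definition ev3 (L : seq (key3 * int)) (F : key3 -> K) : K := \sum_(p <- L) p.2%:~R * F p.1.

Lemma ev3_cat L1 L2 F : ev3 (L1 ++ L2) F = ev3 L1 F + ev3 L2 F.
Proof. by rewrite /ev3 big_cat. Qed.
Lemma ev3_pmap f sg L F : ev3 (pmap3 f sg L) F = sg%:~R * ev3 L (fun x => F (f x)).
Proof. by rewrite /ev3 big_map mulr_sumr; apply: eq_bigr => p _ /=; rewrite intrM mulrA. Qed.

Lemma ev3_group L F (W : seq key3) : uniq W -> {subset map fst L <= W} ->
  ev3 L F = \sum_(x <- W) (coefZ L x)%:~R * F x.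
Proof.
elim: L => [|p L IH] uW sub.
  by rewrite /ev3 big_nil big1 // => x _; rewrite mul0r.
rewrite /ev3 big_cons -/(ev3 L F) IH //; last by move=> x xL; apply: sub; rewrite inE xL orbT.
have pW : p.1 \in W by apply: sub; rewrite inE eqxx.
rewrite /= [RHS](eq_bigr (fun x => (if p.1 == x then p.2 else 0)%:~R * F x + (coefZ L x)%:~R * F x)); last first.
  by move=> x _; rewrite intrD mulrDl.
rewrite big_split /=; congr (_ + _).
rewrite (big_rem _ pW) /= eqxx big1_seq ?addr0 // => x /andP[_ xin].
have : x != p.1 by apply: contraTneq xin => ->; rewrite mem_rem_uniqF.
by rewrite eq_sym => /negPf ->; rewrite mul0r.
Qed.
Lemma ev3_zero L F : zerocheck L -> ev3 L F = 0.
Proof.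
move=> /allP H; rewrite (@ev3_group L F (undup (map fst L))) ?undup_uniq //; last first.
  by move=> x; rewrite mem_undup.
by rewrite big1_seq // => x /andP[_]; rewrite mem_undup => /H /eqP ->; rewrite mul0r.
Qed.

Lemma mulMM_l a b c k :
  mulM (mulM a b) c k = ev3 (LL k) (fun x => a x.1.1 * b x.1.2 * c x.2).
Proof.
rewrite /mulM /ev3 /LL big_allpairs_dep; apply: eq_bigr => t _ /=.
rewrite mulr_suml mulr_sumr; apply: eq_bigr => s _; rewrite intrM; ring.
Qed.
Lemma mulMM_r a b c k :
  mulM a (mulM b c) k = ev3 (RL k) (fun x => a x.1.1 * b x.1.2 * c x.2).
Proof.
rewrite /mulM /ev3 /RL big_allpairs_dep; apply: eq_bigr => t _ /=.
rewrite mulr_sumr mulr_sumr; apply: eq_bigr => s _; rewrite intrM; ring.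
Qed.

Lemma LS_id a b c k :
  mulM (mulM a b) c k - mulM a (mulM b c) k - (mulM (mulM b a) c k - mulM b (mulM a c) k) = 0.
Proof.
pose F := fun x : key3 => a x.1.1 * b x.1.2 * c x.2.
have E1 : mulM (mulM b a) c k = ev3 (LL k) (fun x => F (sw12 x)).
  by rewrite mulMM_l /ev3; apply: eq_bigr => p _; rewrite /F /sw12 /=; ring.
have E2 : mulM b (mulM a c) k = ev3 (RL k) (fun x => F (sw12 x)).
  by rewrite mulMM_r /ev3; apply: eq_bigr => p _; rewrite /F /sw12 /=; ring.
have := ev3_zero F (LSL_ok k).
rewrite /LSL !ev3_cat !ev3_pmap E1 E2 mulMM_l mulMM_r -/F.
move=> <-; rewrite /=; ring.
Qed.

Lemma A1_id a b c k :
  mulM (mulM a b) c k + (mulM (mulM b a) c k + (mulM (mulM a c) b k +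
  (mulM (mulM c a) b k + (mulM (mulM b c) a k + mulM (mulM c b) a k)))) = 0.
Proof.
pose F := fun x : key3 => a x.1.1 * b x.1.2 * c x.2.
have := ev3_zero F (A1L_ok k).
rewrite /A1L !ev3_cat !ev3_pmap !mulMM_l.
move=> <-; rewrite /ev3 /F /pA /pB /pC /pD /pE /pF /=.
rewrite !mul1r; congr (_ + (_ + (_ + (_ + (_ + _))))); apply: eq_bigr => p _; ring.
Qed.

Lemma mulMDl a b c : mulM (fun n => a n + b n) c = fun k => mulM a c k + mulM b c k.
Proof. by apply: functional_extensionality => k; rewrite /mulM -big_split; apply: eq_bigr => t _ /=; ring. Qed.
Lemma mulMDr a b c : mulM c (fun n => a n + b n) = fun k => mulM c a k + mulM c b k.
Proof. by apply: functional_extensionality => k; rewrite /mulM -big_split; apply: eq_bigr => t _ /=; ring. Qed.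
Lemma mulMZl (x : K) a b : mulM (fun n => x * a n) b = fun k => x * mulM a b k.
Proof. by apply: functional_extensionality => k; rewrite /mulM mulr_sumr; apply: eq_bigr => t _ /=; ring. Qed.
Lemma mulMZr (x : K) a b : mulM a (fun n => x * b n) = fun k => x * mulM a b k.
Proof. by apply: functional_extensionality => k; rewrite /mulM mulr_sumr; apply: eq_bigr => t _ /=; ring. Qed.
Lemma mulM0l b : mulM (fun _ => 0) b = fun _ => 0.
Proof. by apply: functional_extensionality => k; rewrite /mulM big1 // => t _; rewrite mul0r mulr0. Qed.
Lemma mulM0r b : mulM b (fun _ => 0) = fun _ => 0.
Proof. by apply: functional_extensionality => k; rewrite /mulM big1 // => t _; rewrite mulr0 mulr0. Qed.

Fixpoint evM (v : nat -> M) (t : term K) : M :=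
  match t with
  | Var n => v n
  | Zero => fun _ => 0
  | Add a b => fun n => evM v a n + evM v b n
  | Scal c a => fun n => c * evM v a n
  | Mul a b => mulM (evM v a) (evM v b)
  end.

Lemma evM_subst v s p : evM v (subst s p) = evM (fun n => evM v (s n)) p.
Proof. by elim: p => //= [a -> b ->|c a ->|a -> b ->]. Qed.

Lemma evM_sound a b : tcong (@LS_A1_ids K) a b -> forall v, evM v a = evM v b.
Proof.
elim=> {a b} /=.
- by [].
- by move=> a b _ E v; rewrite E.
- by move=> a b c _ E1 _ E2 v; rewrite E1 E2.
- by move=> a a' b b' _ E1 _ E2 v; rewrite E1 E2.
- by move=> k a a' _ E v; rewrite E.
- by move=> a a' b b' _ E1 _ E2 v; rewrite E1 E2.
- by move=> a b c v; apply: functional_extensionality => n; rewrite addrA.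
- by move=> a b v; apply: functional_extensionality => n; rewrite addrC.
- by move=> a v; apply: functional_extensionality => n; rewrite add0r.
- by move=> a v; apply: functional_extensionality => n; rewrite mulN1r subrr.
- by move=> a v; apply: functional_extensionality => n; rewrite mul1r.
- by move=> k l a v; apply: functional_extensionality => n; rewrite mulrA.
- by move=> k a b v; apply: functional_extensionality => n; rewrite mulrDr.
- by move=> k l a v; apply: functional_extensionality => n; rewrite mulrDl.
- by move=> a b c v; rewrite mulMDl.
- by move=> a b c v; rewrite mulMDr.
- by move=> k a b v; rewrite mulMZl.
- by move=> k a b v; rewrite mulMZr.
- move=> p s Hp v; rewrite evM_subst.
  set w := fun n => evM v (s n).
  apply: functional_extensionality => k.
  case: Hp => -> /=.
  + have := LS_id (w 0%N) (w 1%N) (w 2%N) k; rewrite /x0 /x1 /x2 /= => H.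
    by rewrite -[RHS]H; ring.
  + have := A1_id (w 0%N) (w 1%N) (w 2%N) k; rewrite /x0 /x1 /x2 /= => H.
    by rewrite -[RHS]H.
Qed.
End Model.


Definition cz (L : seq (nat * nat * int)) (a b : nat) : int :=
  foldr (fun t acc => (if (t.1.1 == a) && (t.1.2 == b) then t.2 else 0) + acc) 0 L.
Definition midx (j : nat) : nat := nth 0%N [:: 30; 28; 21; 12; 4]%N j.
Lemma chain_check : all (fun q => all (fun j => all (fun k =>
   cz (tab k) q (midx j) == (if (q.+1 == j) && (k == midx j.-1) then 4 else 0))
   (iota 0 31)) (iota 0 5)) (iota 0 4).
Proof. by vm_compute. Qed.

Section Comm.
Variable K : fieldType.
Local Notation M := (M K).


Fixpoint evCM (v : nat -> M) (t : term K) : M :=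
  match t with
  | Var n => v n
  | Zero => fun _ => 0
  | Add a b => fun n => evCM v a n + evCM v b n
  | Scal c a => fun n => c * evCM v a n
  | Mul a b => fun n => mulM (evCM v a) (evCM v b) n + (-1) * mulM (evCM v b) (evCM v a) n
  end.

Lemma evM_evalC v f : evM v (evalC Var f) = evCM v f.
Proof. by elim: f => //= [a -> b ->|c a ->|a -> b ->]. Qed.

Definition actW (v : nat -> M) (w : seq nat) (x : M) : M := foldr (fun j y => mulM (v j) y) x w.
Definition actL (v : nat -> M) (L : seq (seq nat * K)) (x : M) : M :=
  fun n => \sum_(p <- L) p.2 * actW v p.1 x n.

Lemma mulM_sumr (T : Type) (r : seq T) (G : T -> M) a :
  mulM a (fun n => \sum_(q <- r) G q n) = fun k => \sum_(q <- r) mulM a (G q) k.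
Proof.
apply: functional_extensionality => k; rewrite /mulM.
under eq_bigr do rewrite mulr_sumr mulr_sumr.
by rewrite exchange_big.
Qed.
Lemma mulM_suml (T : Type) (r : seq T) (G : T -> M) a :
  mulM (fun n => \sum_(q <- r) G q n) a = fun k => \sum_(q <- r) mulM (G q) a k.
Proof.
apply: functional_extensionality => k; rewrite /mulM.
under eq_bigr do rewrite mulr_suml mulr_sumr.
by rewrite exchange_big.
Qed.

Lemma actW_sum v (T : Type) (r : seq T) (c : T -> K) (G : T -> M) u :
  actW v u (fun n => \sum_(q <- r) c q * G q n) = fun n => \sum_(q <- r) c q * actW v u (G q) n.
Proof.
elim: u => [|j u IH] //=; rewrite IH mulM_sumr.
apply: functional_extensionality => k; apply: eq_bigr => q _.
by rewrite mulMZr.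
Qed.
Lemma actW_cat v u w x : actW v (u ++ w) x = actW v u (actW v w x).
Proof. by rewrite /actW foldr_cat. Qed.

Lemma actL_mulL v L1 L2 x : actL v (mulL L1 L2) x = actL v L1 (actL v L2 x).
Proof.
apply: functional_extensionality => n; rewrite /actL /mulL big_allpairs_dep /=.
apply: eq_bigr => p _; rewrite actW_sum mulr_sumr; apply: eq_bigr => q _ /=.
by rewrite actW_cat mulrA.
Qed.

Lemma act_alpha v g x : mulM (evCM v g) x = actL v (alpha g) x.
Proof.
elim: g x => [j||a iha b ihb|c a iha|a iha b ihb] x /=.
- by apply: functional_extensionality => n; rewrite /actL big_seq1 mul1r.
- by rewrite mulM0l; apply: functional_extensionality => n; rewrite /actL big_nil.
- rewrite mulMDl iha ihb; apply: functional_extensionality => n.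
  by rewrite /actL big_cat.
- rewrite mulMZl iha; apply: functional_extensionality => n.
  by rewrite /actL big_map mulr_sumr; apply: eq_bigr => p _ /=; rewrite mulrA.
- rewrite mulMDl mulMZl; apply: functional_extensionality => n.
  have H := LS_id (evCM v a) (evCM v b) x n.
  have -> : mulM (mulM (evCM v a) (evCM v b)) x n + -1 * mulM (mulM (evCM v b) (evCM v a)) x n
      = mulM (evCM v a) (mulM (evCM v b) x) n - mulM (evCM v b) (mulM (evCM v a) x) n.
    by apply/eqP; rewrite -subr_eq0 -[X in _ == X]H; apply/eqP; ring.
  rewrite [mulM (evCM v b) x]ihb [mulM (evCM v a) x]iha iha ihb -!actL_mulL.
  rewrite {3}/actL big_cat big_map /=; congr (_ + _).
  rewrite /actL -sumrN; apply: eq_bigr => p _; ring.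
Qed.

Definition E (i : nat) : M := fun n => (n == i)%:R.

Lemma mulM_E a b k : mulM (E a) (E b) k = (cz (tab k) a b)%:~R.
Proof.
rewrite /mulM /cz; elim: (tab k) => [|t L IH]; first by rewrite big_nil.
rewrite big_cons IH /= intrD /E; congr (_ + _).
by case: eqP => _; case: eqP => _ /=; rewrite ?mulr1 ?mulr0 ?mul0r.
Qed.

Lemma chain q j : (q < 4)%N -> (j < 5)%N ->
  mulM (E q) (E (midx j)) = fun k => if q.+1 == j then 4 * E (midx j.-1) k else 0.
Proof.
move=> hq hj; apply: functional_extensionality => k; rewrite mulM_E.
case: (ltnP k 31) => hk.
  have /allP/(_ q) := chain_check; rewrite mem_iota add0n => /(_ hq).
  move=> /allP/(_ j); rewrite mem_iota add0n => /(_ hj).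
  move=> /allP/(_ k); rewrite mem_iota add0n => /(_ hk) /eqP ->.
  case: (q.+1 == j) => /=; last by [].
  rewrite /E; case: (k == midx j.-1); by rewrite ?mulr1 ?mulr0.
rewrite tab_big // /=; case: (q.+1 == j) => //.
rewrite /E; have : (midx j.-1 < 31)%N.
  by rewrite /midx; case: (j.-1) => [|[|[|[|[|m]]]]]; rewrite /= ?nth_nil.
by move=> h; rewrite (gtn_eqF (leq_trans h hk)) mulr0.
Qed.

Definition vu (u : seq nat) (x : nat) : M :=
  fun n => \sum_(q <- iota 0 (size u)) (nth 0%N u q == x)%:R * E q n.

Lemma sum_if_iota n j (F : nat -> K) : (j <= n)%N ->
  \sum_(q <- iota 0 n) (if q.+1 == j then F q else 0) = if (0 < j)%N then F j.-1 else 0.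
Proof.
elim: n => [|n IH] hj.
  by move: hj; rewrite leqn0 => /eqP ->; rewrite big_nil.
rewrite -addn1 iotaD big_cat big_seq1 add0n /=.
case: (ltngtP j n.+1) hj => // [hj' _|-> _].
  by rewrite IH // addr0.
rewrite /= big1_seq ?add0r // => q; rewrite mem_iota add0n => /andP[_ hq].
by rewrite eqSS (ltn_eqF hq).
Qed.

Lemma vu_mm u x j : (size u <= 4)%N -> (j <= size u)%N ->
  mulM (vu u x) (E (midx j)) =
  fun k => if (0 < j)%N && (nth 0%N u j.-1 == x) then 4 * E (midx j.-1) k else 0.
Proof.
move=> hu hj; rewrite /vu mulM_suml; apply: functional_extensionality => k.
rewrite big_seq (eq_bigr (fun q => if q.+1 == j then (nth 0%N u q == x)%:R * (4 * E (midx j.-1) k) else 0)).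
  rewrite -big_seq sum_if_iota //; case: (0 < j)%N => //=.
  by case: eqP => _; rewrite ?mul1r ?mul0r.
move=> q; rewrite mem_iota add0n => /andP[_ hq].
rewrite mulMZl chain //; last exact: leq_ltn_trans hj _.
  by case: (q.+1 == j) => //; rewrite mulr0.
exact: leq_trans hq hu.
Qed.

Lemma act_chain u w : (size u <= 4)%N ->
  actW (vu u) w (E (midx (size u))) =
  if (size w <= size u)%N && (w == drop (size u - size w) u)
  then (fun k => 4 ^+ size w * E (midx (size u - size w)) k) else (fun _ => 0).
Proof.
move=> hu; set k := size u.
elim: w => [|x w IH] /=.
  rewrite subn0 drop_size eqxx /=; apply: functional_extensionality => n.
  by rewrite expr0 mul1r.
rewrite IH; set m := size w.
case: ifP => [/andP[hm /eqP hw]|hc].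
  rewrite mulMZr vu_mm ?leq_subr //.
  case: (ltngtP m k) hm => // [hmk _|hmk _].
  - have hlt : ((k - m).-1 < size u)%N by rewrite -/k; lia.
    have e1 : (k - m.+1)%N = (k - m).-1 by lia.
    rewrite subn_gt0 hmk /= e1 (drop_nth 0%N hlt).
    have e2 : ((k - m).-1).+1 = (k - m)%N by lia.
    rewrite e2 -hw eqseq_cons eqxx andbT eq_sym.
    case: eqP => _; apply: functional_extensionality => n /=; last by rewrite mulr0.
    by rewrite exprS mulrA [4 ^+ m * 4]mulrC.
  - rewrite hmk subnn /=; apply: functional_extensionality => n.
    by rewrite mulr0.
rewrite mulM0r; case: ifP => // /andP[hm].
have hlt : (k - m.+1 < size u)%N by rewrite -/k; lia.
rewrite (drop_nth 0%N hlt) eqseq_cons => /andP[_ /eqP hw].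
have e2 : (k - m.+1).+1 = (k - m)%N by lia.
rewrite e2 in hw; move: hc; rewrite -hw eqxx andbT.
by have -> : (m <= k)%N by lia.
Qed.
End Comm.


Lemma E_midx30 (K : fieldType) i : (i <= 4)%N -> E K (midx i) 30%N = (i == 0%N)%:R.
Proof. by rewrite /E; case: i => [|[|[|[|[|]]]]]. Qed.

Lemma coef_vanish (K : fieldType) (charK0 : [pchar K] =i pred0) (f : term K) :
  (tdeg f <= 4)%N -> comm_identity_LS_A1 f -> forall u, coef (alpha f) u = 0.
Proof.
move=> hd hc u.
case: (leqP (size u) 4) => hu; last first.
  rewrite /coef big_seq big1 // => p /alpha_size /andP[_ hp].
  case: eqP => [e|_]; last by rewrite mul0r.
  by move: hp; rewrite e => /leq_trans/(_ hd); rewrite leqNgt hu.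
set k := size u; set v := vu K u.
have H1 : evCM v f = fun _ => 0.
  by rewrite -evM_evalC (evM_sound (hc Var) v).
have H2 := act_alpha v f (E K (midx k)); rewrite H1 mulM0l in H2.
have H3 := congr1 (fun F => F 30%N) H2; rewrite /= /actL in H3.
have H4 : forall p : seq nat * K, actW v p.1 (E K (midx k)) 30%N = (p.1 == u)%:R * 4 ^+ k.
  move=> p; rewrite (@act_chain K u p.1 hu).
  have [e|ne] := eqVneq p.1 u.
    rewrite e subnn drop0 eqxx leqnn /= E_midx30 //=.
    by rewrite mulr1 mul1r.
  rewrite mul0r.
  case: ifP => [/andP[hs /eqP hw]|_] //=.
  rewrite E_midx30; last by lia.
  have : (size u - size p.1)%N != 0%N.
    by apply/eqP => e; move/eqP: ne; apply; rewrite hw e drop0.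
  by move/negPf ->; rewrite mulr0.
have n4 : (4 : K) ^+ k != 0.
  by apply: expf_neq0; move/pcharf0P: charK0 => ->.
apply/eqP; rewrite -(mulIr_eq0 _ (mulIf n4)) //.
apply/eqP; rewrite /coef mulr_suml [RHS]H3; apply: eq_bigr => p _.
by rewrite H4; ring.
Qed.

Theorem mainTheorem6 (K : fieldType) (charK0 : [pchar K] =i pred0)
  (f : term K) (degf : (tdeg f <= 4)%N) :
  comm_identity_LS_A1 f -> tcong (@Lie_ids K) f Zero.
Proof.
move=> H; apply: (lie_complete charK0 degf) => w.
exact: (@coef_vanish K charK0 f degf H w).
Qed.
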